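(* Let $n\ge 3$ be an odd integer and $k\ge 3$ an integer. Then the metric dimension of $(C_n\square P_k)\square P_2$ is $3$, i.e. the minimum size of a resolving set of $(C_n\square P_k)\square P_2$ is $3$.
   Context: All graphs are finite and connected; $d(u,v)$ is the shortest-path distance. $C_n$ is the cycle on $n$ vertices and $P_k$ the path on $k$ vertices. The cartesian product $G\square H$ has vertex set $V(G)\times V(H)$, with $(g_1,h_1)$ adjacent to $(g_2,h_2)$ iff either $h_1=h_2$ and $g_1g_2\in E(G)$, or $g_1=g_2$ and $h_1h_2\in E(H)$. For an ordered set $Q=\{q_1,\dots,q_l\}$ of vertices, $r(x|Q)=(d(x,q_1),\dots,d(x,q_l))$. $Q$ is a resolving set of $G$ if any two distinct vertices of $G$ have distinct vectors $r(\cdot|Q)$; the metric dimension $\beta(G)$ is the minimum size of a resolving set. *)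

(* Defs.v *)
From mathcomp Require Import all_boot.
Set Implicit Arguments. Unset Strict Implicit. Unset Printing Implicit Defensive.

(* A graph is an (intended symmetric, irreflexive) edge relation on a finType. *)

(* In a connected graph on #|T| vertices this is always < #|T|, so the search
   range iota 0 #|T| suffices; a shortest walk is a shortest path. *)
Definition has_walk {T : finType} (e : rel T) (x y : T) (n : nat) : bool :=
  [exists p : n.-tuple T, path e x p && (last x p == y)].

Definition dist {T : finType} (e : rel T) (x y : T) : nat :=
  find (has_walk e x y) (iota 0 #|T|).

Definition connected_graph {T : finType} (e : rel T) : Prop :=
  forall x y : T, exists n, has_walk e x y n.

Definition cycle_rel (n : nat) : rel 'I_n :=
  fun i j => (j == (i.+1 %% n) :> nat) || (i == (j.+1 %% n) :> nat).

Definition path_rel (k : nat) : rel 'I_k :=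
  fun i j => (j == i.+1 :> nat) || (i == j.+1 :> nat).

Definition box_rel {A B : finType} (eA : rel A) (eB : rel B) : rel (A * B) :=
  fun u v => ((u.2 == v.2) && eA u.1 v.1) || ((u.1 == v.1) && eB u.2 v.2).

Definition resolving {T : finType} (e : rel T) (Q : {set T}) : Prop :=
  forall x y : T, (forall q, q \in Q -> dist e x q = dist e y q) -> x = y.

Definition metric_dim_eq {T : finType} (e : rel T) (b : nat) : Prop :=
  (exists Q : {set T}, resolving e Q /\ #|Q| = b) /\
  (forall Q : {set T}, resolving e Q -> b <= #|Q|).

Arguments cycle_rel n : clear implicits.
Arguments path_rel k : clear implicits.

(* Main.v *)
Require Import Defs.
From mathcomp Require Import all_boot zify.
Set Implicit Arguments. Unset Strict Implicit.

Definition good {T : finType} (e : rel T) (D : T -> T -> nat) :=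
  [/\ (forall x, D x x = 0), (forall x u v, e u v -> D x v <= (D x u).+1)
   & (forall x y, x != y -> exists z, e z y /\ (D x z).+1 = D x y)].

Section G.
Variables (T : finType) (e : rel T) (D : T -> T -> nat).
Hypothesis hg : good e D.

Lemma D0_eq x y : D x y = 0 -> x = y.
Proof.
case: hg => _ _ hd; case: (eqVneq x y) => // /hd [z [_ h]]; lia.
Qed.

Lemma D1_edge x y : D x y = 1 -> e x y.
Proof.
case: hg => h0 _ hd => h1; case: (eqVneq x y) => [exy|/hd [z [hz h]]].
  by subst; rewrite h0 in h1.
have hz0 : D x z = 0 by lia.
by rewrite -(D0_eq hz0) in hz.
Qed.

Lemma path_lb s x0 (p : seq T) : path e x0 p -> D s (last x0 p) <= D s x0 + size p.
Proof.
case: hg => _ hl _.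
elim: p x0 => [|y p IH] x0 /=; first by rewrite addn0.
move=> /andP [he hp]; have := IH _ hp; have := hl s _ _ he; lia.
Qed.

Lemma walk_lb x y m : has_walk e x y m -> D x y <= m.
Proof.
case: hg => h0 _ _.
move=> /existsP [p /andP [hp /eqP hl]].
have := path_lb x hp; rewrite hl h0 size_tuple; lia.
Qed.

Lemma walk_ex_aux x d y : D x y = d -> has_walk e x y d.
Proof.
case: hg => h0 _ hd.
elim: d y => [|d IH] y hxy.
  rewrite -(D0_eq hxy); apply/existsP; exists [tuple]; by rewrite /= eqxx.
case: (eqVneq x y) => [exy|/hd [z [hz h]]]; first by subst; rewrite h0 in hxy.
have /existsP [p /andP [hp /eqP hl]] := IH z ltac:(lia).
have hs : size (rcons p y) == d.+1 by rewrite size_rcons size_tuple.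
apply/existsP; exists (Tuple hs) => /=.
by rewrite rcons_path hp hl hz last_rcons eqxx.
Qed.

Lemma walk_ex x y : has_walk e x y (D x y).
Proof. exact: walk_ex_aux. Qed.

Lemma find_iota_eq (P : pred nat) N d :
  d < N -> P d -> (forall m, P m -> d <= m) -> find P (iota 0 N) = d.
Proof.
move=> hdN hPd hmin.
have hs : has P (iota 0 N) by apply/hasP; exists d => //; rewrite mem_iota.
have hf : find P (iota 0 N) < N by rewrite -[X in _ < X](size_iota 0 N) -has_find.
have := nth_find 0 hs; rewrite nth_iota // add0n => /hmin h1.
apply/eqP; rewrite eqn_leq h1 andbT leqNgt; apply/negP => h.
by have := before_find 0 h; rewrite nth_iota // add0n hPd.
Qed.

Lemma dist_good x y : D x y < #|T| -> dist e x y = D x y.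
Proof.
move=> hb; apply: find_iota_eq => //; first exact: walk_ex.
by move=> m; apply: walk_lb.
Qed.
End G.

Lemma good_box (A B : finType) (eA : rel A) (eB : rel B) DA DB :
  good eA DA -> good eB DB ->
  good (box_rel eA eB) (fun u v => DA u.1 v.1 + DB u.2 v.2).
Proof.
case=> a0 al ad; case=> b0 bl bd; split.
- by move=> x; rewrite a0 b0.
- move=> x u v /orP [/andP [/eqP h he]|/andP [/eqP h he]].
    by have := al x.1 _ _ he; rewrite h; lia.
  by have := bl x.2 _ _ he; rewrite h; lia.
- move=> [x1 x2] [y1 y2] /=; case: (eqVneq x1 y1) => [<-|h1] hne.
    have h2 : x2 != y2 by apply: contraNneq hne => ->.
    have [z [hz hzd]] := bd _ _ h2; exists (x1, z); split.
      by rewrite /box_rel /= eqxx hz orbT.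
    by move=> /=; lia.
  have [z [hz hzd]] := ad _ _ h1; exists (z, y2); split.
    by rewrite /box_rel /= eqxx hz.
  by move=> /=; lia.
Qed.

Definition ad (a b : nat) := a - b + (b - a).
Definition dcy n (a b : nat) := minn (ad a b) (n - ad a b).

Lemma dcy_le n a b : ad a b <= n - ad a b -> dcy n a b = ad a b.
Proof. by move=> h; rewrite /dcy; apply/minn_idPl. Qed.
Lemma dcy_ge n a b : n - ad a b <= ad a b -> dcy n a b = n - ad a b.
Proof. by move=> h; rewrite /dcy; apply/minn_idPr. Qed.
Lemma adL a b : a <= b -> ad a b = b - a.
Proof. rewrite /ad; lia. Qed.
Lemma adR a b : b <= a -> ad a b = a - b.
Proof. rewrite /ad; lia. Qed.
Lemma lip n x u : 3 <= n -> x < n -> u < n ->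
  dcy n x (if u.+1 == n then 0 else u.+1) <= (dcy n x u).+1 /\
  dcy n x u <= (dcy n x (if u.+1 == n then 0 else u.+1)).+1.
Proof.
move=> hn hx hu; case: eqP => h1.
  rewrite /dcy (adR (leq0n x)); case: (leqP x u) => h.
    by rewrite (adL h); lia.
  by rewrite (adR (ltnW h)); lia.
rewrite /dcy; case: (leqP x u) => h.
  by rewrite (adL h) (adL (leqW h)); lia.
by rewrite (adR (ltnW h)) (adR h); lia.
Qed.
Lemma desc n x y : 3 <= n -> x < n -> y < n -> x != y ->
  dcy n x (if y.+1 == n then 0 else y.+1) + 1 = dcy n x y \/
  dcy n x (if y == 0 then n.-1 else y.-1) + 1 = dcy n x y.
Proof.
move=> hn hx hy hxy.
case: (ltnP x y) => hxy'.

  case: (leqP (y - x) (n - (y - x))) => h.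
    right; rewrite ifF; last by apply/eqP; lia.
    rewrite /dcy (adL (ltnW hxy')) adL; last by lia.
    rewrite (minn_idPl h) (minn_idPl _); lia.
  left; case: eqP => h1.
    rewrite /dcy (adL (ltnW hxy')) adR //.
    lia.
  rewrite /dcy (adL (ltnW hxy')) adL; last by lia.
  lia.
case: (leqP (x - y) (n - (x - y))) => h.
  left; rewrite ifF; last by apply/eqP; lia.
  rewrite /dcy (adR hxy') adR; last by lia.
  lia.
right; case: eqP => h1.
  rewrite /dcy (adR hxy') adL; last by lia.
  lia.
rewrite /dcy (adR hxy') adR; last by lia.
lia.
Qed.

Lemma modS_if n i : i < n -> i.+1 %% n = if i.+1 == n then 0 else i.+1.
Proof.
move=> hi; case: eqP => [->|h]; first by rewrite modnn.
by rewrite modn_small //; lia.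
Qed.

Lemma modP_if n i : i < n -> (i + n.-1) %% n = if i == 0 then n.-1 else i.-1.
Proof.
move=> hi; case: eqP => [->|h]; first by rewrite add0n modn_small //; lia.
have -> : i + n.-1 = i.-1 + n by lia.
by rewrite modnDr modn_small //; lia.
Qed.

Lemma modPS n i : i < n -> ((i + n.-1) %% n).+1 %% n = i.
Proof.
move=> hi; rewrite modP_if //; case: eqP => h.
  by rewrite modS_if; [rewrite ifT //; apply/eqP; lia | lia].
by rewrite modS_if; [rewrite ifF; [lia| apply/eqP; lia] | lia].
Qed.

Lemma good_path k : good (path_rel k) (fun i j => ad i j).
Proof.
split.
- by move=> x; rewrite /ad; lia.
- by move=> x u v /orP [/eqP h|/eqP h]; rewrite /ad; lia.
- move=> x y hxy; case: (ltnP x y) => h.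
    have hz : y.-1 < k by apply: leq_ltn_trans (leq_pred y) (ltn_ord y).
    exists (Ordinal hz); split; first by rewrite /path_rel /=; apply/orP; left; apply/eqP; lia.
    by rewrite /ad /=; lia.
  have hne : (x : nat) != y by [].
  have hz : y.+1 < k by apply: leq_ltn_trans (ltn_ord x); lia.
  exists (Ordinal hz); split; first by rewrite /path_rel /=; apply/orP; right; apply/eqP.
  by rewrite /ad /=; lia.
Qed.

Lemma good_cycle n : 3 <= n -> good (cycle_rel n) (fun i j => dcy n i j).
Proof.
move=> hn; have n0 : 0 < n by lia.
split.
- by move=> x; rewrite /dcy /ad; lia.
- move=> x u v; have := ltn_ord u; have := ltn_ord v; have := ltn_ord x.
  move=> hx hv hu /orP [/eqP h|/eqP h].
    by rewrite h modS_if //; case: (lip hn hx hu).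
  by rewrite h modS_if //; case: (lip hn hx hv).
- move=> x y hxy.
  have hne : (x : nat) != y by [].
  have := ltn_ord x; have := ltn_ord y => hy hx.
  have hp : y.+1 %% n < n by apply: ltn_pmod.
  have hm : (y + n.-1) %% n < n by apply: ltn_pmod.
  have [hz|hz] : dcy n x (y.+1 %% n) + 1 = dcy n x y \/ dcy n x ((y + n.-1) %% n) + 1 = dcy n x y.
    by rewrite modS_if // modP_if //; apply: desc.
    exists (Ordinal hp); split; last by rewrite /= -hz; lia.
    by rewrite /cycle_rel /= eqxx orbT.
  exists (Ordinal hm); split; last by rewrite /= -hz; lia.
  by rewrite /cycle_rel /= modPS // eqxx.
Qed.

Lemma dcyL m i : i <= m -> dcy m.*2.+1 i 0 = i /\ dcy m.*2.+1 i m = m - i.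
Proof. rewrite /dcy /ad; lia. Qed.
Lemma dcyR m i : m < i < m.*2.+1 -> dcy m.*2.+1 i 0 = m.*2.+1 - i /\ dcy m.*2.+1 i m = i - m.
Proof. rewrite /dcy /ad; lia. Qed.

Lemma core n m i j l i' j' l' : n = m.*2.+1 -> i < n -> i' < n -> l < 2 -> l' < 2 ->
  dcy n i 0 + ad j 0 + ad l 0 = dcy n i' 0 + ad j' 0 + ad l' 0 ->
  dcy n i 0 + ad j 0 + ad l 1 = dcy n i' 0 + ad j' 0 + ad l' 1 ->
  dcy n i m + ad j 0 + ad l 0 = dcy n i' m + ad j' 0 + ad l' 0 ->
  [/\ i = i', j = j' & l = l'].
Proof.
move=> ->.
have a0 x : ad x 0 = x by rewrite /ad; lia.
rewrite !a0 => hi hi' hl hl'.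
have [[h1 [h2 h3]]|[h1 [h2 h3]]] : (dcy m.*2.+1 i 0 = i /\ dcy m.*2.+1 i m = m - i /\ i <= m) \/
   (dcy m.*2.+1 i 0 = m.*2.+1 - i /\ dcy m.*2.+1 i m = i - m /\ m < i).
  case: (leqP i m) => h; [left; have := @dcyL m i h|right; have := @dcyR m i]; lia.
all: have [[h1' [h2' h3']]|[h1' [h2' h3']]] : (dcy m.*2.+1 i' 0 = i' /\ dcy m.*2.+1 i' m = m - i' /\ i' <= m) \/
   (dcy m.*2.+1 i' 0 = m.*2.+1 - i' /\ dcy m.*2.+1 i' m = i' - m /\ m < i');
  first (by case: (leqP i' m) => h; [left; have := @dcyL m i' h|right; have := @dcyR m i']; lia).
all: rewrite h1 h1' h2 h2' /ad; split; lia.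
Qed.

Section Main.
Variables (n k : nat).
Hypotheses (hn : 3 <= n) (hk : 3 <= k).

Definition V := ('I_n * 'I_k * 'I_2)%type.
Definition E : rel V := box_rel (box_rel (cycle_rel n) (path_rel k)) (path_rel 2).
Definition Df (u v : V) : nat := dcy n u.1.1 v.1.1 + ad u.1.2 v.1.2 + ad u.2 v.2.

Lemma good_Df : good E Df.
Proof. exact: (good_box (good_box (good_cycle hn) (good_path k)) (good_path 2)). Qed.

Lemma Df_sym u v : Df u v = Df v u.
Proof. by rewrite /Df /dcy /ad (addnC (u.1.1 - v.1.1)) (addnC (u.1.2 - v.1.2)) (addnC (u.2 - v.2)). Qed.

Lemma dist_Df u v : dist E u v = Df u v.
Proof.
apply: (dist_good good_Df).
rewrite !card_prod !card_ord /Df /dcy /ad.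
have := ltn_ord u.1.1; have := ltn_ord v.1.1; have := ltn_ord u.1.2; have := ltn_ord v.1.2;
have := ltn_ord u.2; have := ltn_ord v.2.
move=> *.
have h1 : minn (u.1.1 - v.1.1 + (v.1.1 - u.1.1)) (n - (u.1.1 - v.1.1 + (v.1.1 - u.1.1))) < n by lia.
have h2 : u.1.2 - v.1.2 + (v.1.2 - u.1.2) < k by lia.
have h3 : u.2 - v.2 + (v.2 - u.2) < 2 by lia.
have h4 : n + k <= n * k * 2 by nia.
move: h1 h2 h3 h4; move: (minn _ _) => a; move: (u.1.2 - v.1.2 + _) => b.
move: (u.2 - v.2 + _) => c; move: (n * k * 2) => N; lia.
Qed.


Lemma dcyS i : i < n -> dcy n i (i.+1 %% n) = 1.
Proof. move=> hi; rewrite modS_if //; case: eqP => h; rewrite /dcy /ad; lia. Qed.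
Lemma dcyP i : i < n -> dcy n i ((i + n.-1) %% n) = 1.
Proof. move=> hi; rewrite modP_if //; case: eqP => h; rewrite /dcy /ad; lia. Qed.
Lemma dcy0 i : dcy n i i = 0.
Proof. rewrite /dcy /ad; lia. Qed.
Lemma ad0 i : ad i i = 0.
Proof. rewrite /ad; lia. Qed.
Lemma modS_ne i : i < n -> i.+1 %% n <> i.
Proof. move=> hi; rewrite modS_if //; case: eqP => h; lia. Qed.
Lemma modP_ne i : i < n -> (i + n.-1) %% n <> i.
Proof. move=> hi; rewrite modP_if //; case: eqP => h; lia. Qed.
Lemma modSP_ne i : i < n -> i.+1 %% n <> (i + n.-1) %% n.
Proof. move=> hi; rewrite modS_if // modP_if //; case: eqP => h; case: eqP => h'; lia. Qed.

Lemma lower Q : resolving E Q -> 3 <= #|Q|.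
Proof.
move=> hQ; rewrite leqNgt; apply/negP => hlt.
have n0 : 0 < n by lia.
have k0 : 0 < k by lia.
pose x0 : V := ((Ordinal n0, Ordinal k0), Ordinal (isT : 0 < 2)).
pose a := head x0 (enum Q).
pose b := nth x0 (enum Q) 1.
have hab : forall q, q \in Q -> q = a \/ q = b.
  move=> q hq; have hqs : q \in enum Q by rewrite mem_enum.
  have hs : size (enum Q) < 3 by rewrite -cardE.
  have hi : index q (enum Q) < size (enum Q) by rewrite index_mem.
  have := nth_index x0 hqs.
  case: (index q (enum Q)) hi => [|[|i]] hi <-.
  - by left; rewrite nth0.
  - by right.
  - lia.
case: good_Df => _ hlip _.
have hi := ltn_ord a.1.1.
have hjk := ltn_ord a.1.2.
have hl2 := ltn_ord a.2.
have hp : a.1.1.+1 %% n < n by apply: ltn_pmod.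
have hm : (a.1.1 + n.-1) %% n < n by apply: ltn_pmod.
have hj : (if a.1.2.+1 < k then a.1.2.+1 else a.1.2.-1) < k.
  by case: ifP => // _; apply: leq_ltn_trans (leq_pred _) (ltn_ord _).
have hl : 1 - a.2 < 2 by lia.
pose y1 : V := ((Ordinal hp, a.1.2), a.2).
pose y2 : V := ((Ordinal hm, a.1.2), a.2).
pose y3 : V := ((a.1.1, Ordinal hj), a.2).
pose y4 : V := ((a.1.1, a.1.2), Ordinal hl).
have d1 : Df a y1 = 1 by rewrite /Df /= dcyS // !ad0.
have d2 : Df a y2 = 1 by rewrite /Df /= dcyP // !ad0.
have d3 : Df a y3 = 1.
  rewrite /Df /= dcy0 !ad0 /=; case: ifP => h; rewrite /ad; lia.
have d4 : Df a y4 = 1 by rewrite /Df /= dcy0 !ad0 /ad; lia.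
have res : forall s t : V, Df s a = 1 -> Df t a = 1 -> Df b s = Df b t -> s = t.
  move=> s t hs ht hst; apply: hQ => q /hab [->|->]; rewrite !dist_Df.
    by rewrite hs ht.
  by rewrite Df_sym hst Df_sym.
have bnd : forall y, Df a y = 1 -> Df b y <= (Df b a).+1 /\ Df b a <= (Df b y).+1.
  move=> y hy; split; apply: hlip; apply: (D1_edge good_Df) => //.
  by rewrite Df_sym.
have [b1 b1'] := bnd _ d1.
have [b2 b2'] := bnd _ d2.
have [b3 b3'] := bnd _ d3.
have [b4 b4'] := bnd _ d4.
have r := fun s t hs ht hst => res s t (etrans (Df_sym _ _) hs) (etrans (Df_sym _ _) ht) hst.
have : Df b y1 = Df b y2 \/ Df b y1 = Df b y3 \/ Df b y1 = Df b y4 \/ Df b y2 = Df b y3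
      \/ Df b y2 = Df b y4 \/ Df b y3 = Df b y4 by lia.
case=> [/(r _ _ d1 d2)|[/(r _ _ d1 d3)|[/(r _ _ d1 d4)|[/(r _ _ d2 d3)|[/(r _ _ d2 d4)|/(r _ _ d3 d4)]]]]] h.
- by have := congr1 (fun p : V => val p.1.1) h; apply: modSP_ne.
- by have := congr1 (fun p : V => val p.1.1) h; apply: modS_ne.
- by have := congr1 (fun p : V => val p.1.1) h; apply: modS_ne.
- by have := congr1 (fun p : V => val p.1.1) h; apply: modP_ne.
- by have := congr1 (fun p : V => val p.1.1) h; apply: modP_ne.
- have := congr1 (fun p : V => val p.2) h => /=; lia.
Qed.


Lemma upper : odd n -> exists Q : {set V}, resolving E Q /\ #|Q| = 3.
Proof.
move=> hodd.
have n0 : 0 < n by lia.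
have k0 : 0 < k by lia.
pose m := n./2.
have hnm : n = m.*2.+1 by have := odd_double_half n; rewrite hodd /m; lia.
have hmn : m < n by lia.
pose a : V := ((Ordinal n0, Ordinal k0), Ordinal (isT : 0 < 2)).
pose c : V := ((Ordinal n0, Ordinal k0), Ordinal (isT : 1 < 2)).
pose bb : V := ((Ordinal hmn, Ordinal k0), Ordinal (isT : 0 < 2)).
have hres : resolving E [set a; c; bb].
  move=> [[x1 x2] x3] [[y1 y2] y3] H.
  have h1 := H a ltac:(by rewrite !inE eqxx ?orbT).
  have h2 := H c ltac:(by rewrite !inE eqxx ?orbT).
  have h3 := H bb ltac:(by rewrite !inE eqxx ?orbT).
  rewrite !dist_Df /Df /= in h1 h2 h3.
  have [e1 e2 e3] := core hnm (ltn_ord x1) (ltn_ord y1) (ltn_ord x3) (ltn_ord y3) h1 h2 h3.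
  by rewrite (val_inj e1) (val_inj e2) (val_inj e3).
exists [set a; c; bb]; split => //.
apply/eqP; rewrite eqn_leq lower // andbT.
rewrite !cardsU !cards1; lia.
Qed.

End Main.

Theorem theorem3p2 (n k : nat) (hn : 3 <= n) (hodd : odd n) (hk : 3 <= k) :
  metric_dim_eq (box_rel (box_rel (cycle_rel n) (path_rel k)) (path_rel 2)) 3.
Proof.
split; first exact: upper.
by move=> Q; apply: lower.
Qed.
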